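(* In the supercuspidal setting below, let $p$ be odd, $L/\mathbb Q_p$ unramified, $k=c_0\ge2$, and assume $k\ge10$ or $p\ge10$. Let $\psi_0$ be the trivial character modulo $p^k$ and suppose $p\mid a_1a_2a_3$. Then $\widehat H(\psi_0,a_1,a_2,a_3)=0$ unless $p^k\mid a_1a_2a_3$, in which case $$\widehat H(\psi_0,a_1,a_2,a_3)=\overline\gamma\,p^{-2k}\,\tau_L(\xi)\,S(a_1,0;p^k)S(a_2,0;p^k)S(a_3,0;p^k),$$ where $\tau_L(\xi)=\sum_{t\in(\mathcal O_L/p^k\mathcal O_L)^\times}\xi(t)e_{p^k}(-\mathrm{Tr}(t))$ and $S(a,0;p^k)=\sum^*_{x\bmod p^k}e_{p^k}(ax)$.
   Context: Supercuspidal setting: $p$ is a prime, $L/\mathbb Q_p$ a quadratic extension with ring of integers $\mathcal O_L$, ramification index $e\in\{1,2\}$, $d=v_p(\mathrm{disc}(L/\mathbb Q_p))$; $\eta_L$ is the nontrivial quadratic character of $\mathbb Q_p^\times$ trivial on $\mathrm{Nm}(L^\times)$. $\xi$ is a character of $L^\times$ with $\xi\neq\xi\circ(\text{Galois conjugation})$ and $\xi|_{\mathbb Q_p^\times}=\eta_L$, with $(L/\mathbb Q_p,\xi)$ an admissible pair (corresponding to a trivial central character dihedral supercuspidal representation of $\mathrm{PGL}_2(\mathbb Q_p)$). $c(\xi)$ is its conductor exponent and $c_0=c(\xi)/e$. Set $\kappa=c_0$ if $L$ unramified, $\kappa=c_0+1$ if $L$ ramified. Let $\gamma$ be a fixed complex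 number of modulus $1$ depending only on $L$. For integers $m,n$ and $k\ge1$, $$H(m,n;p^k)=\overline\gamma\,p^{-d/2}\sum_{\substack{t\in(\mathcal O_L/p^k\mathcal O_L)^\times\\ \mathrm{Nm}(t)\equiv mn\ (p^k)}}\xi(t)\,e_{p^k}(-\mathrm{Tr}(t))$$ if $k\ge\kappa$ and $p\nmid mn$, and $H(m,n;p^k)=0$ otherwise. For a Dirichlet character $\psi$ mod $p^k$ and integers $a_1,a_2,a_3$, $$\widehat H(\psi,a_1,a_2,a_3)=p^{-2k}\sum_{u,x_1,x_2,x_3\bmod p^k}\overline\psi(u)H(\overline u x_1x_2x_3,1;p^k)\,e_{p^k}(a_1x_1+a_2x_2+a_3x_3-ua_1a_2a_3).$$ Here $e_q(x)=\exp(2\pi i x/q)$, $\overline u$ is the inverse mod $p^k$, and Dirichlet characters vanish on non-units. *)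

(* Defs.v *)
From mathcomp Require Import all_boot all_algebra.
From mathcomp Require Import reals trigo.
From mathcomp Require Export complex.
Set Implicit Arguments. Unset Strict Implicit. Unset Printing Implicit Defensive.
Import GRing.Theory Num.Theory.
Local Open Scope ring_scope.

(* Model of O_L / p^k O_L for L/Q_p unramified, p odd:  O_L = Z_p[sqrt eps]
   with eps a non-square unit; an element x + y sqrt(eps) is the pair (x,y)
   of residues modulo q = p^k. *)

Section Defs.
Variable R : realType.
Variable q : nat.
Variable eps : int.

Definition ZL := ('Z_q * 'Z_q)%type.

Definition Lone : ZL := (1, 0).
Definition Lmul (a b : ZL) : ZL :=
  (a.1 * b.1 + eps%:~R * a.2 * b.2, a.1 * b.2 + a.2 * b.1).
Definition Lnorm (a : ZL) : 'Z_q := a.1 ^+ 2 - eps%:~R * a.2 ^+ 2.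
Definition Ltr (a : ZL) : 'Z_q := a.1 *+ 2.
Definition Lconj (a : ZL) : ZL := (a.1, - a.2).
Definition Lunit (a : ZL) : bool := Lnorm a \is a GRing.unit.

Definition eq_ (x : int) : R[i] :=
  let th := (2 * pi * x%:~R / q%:R) : R in (cos th +i* sin th)%C.
Definition eZ (x : 'Z_q) : R[i] := eq_ (Posz (val x)).

Definition tauL (xi : ZL -> R[i]) : R[i] :=
  \sum_(t : ZL | Lunit t) xi t * eZ (- Ltr t).

Definition Ram (a : int) : R[i] :=
  \sum_(x : 'Z_q | x \is a GRing.unit) eZ (a%:~R * x).

Definition Hker (p k kappa : nat) (gamma : R[i]) (xi : ZL -> R[i]) (m n : int)
  : R[i] :=
  if (kappa <= k)%N && ~~ (p%:Z %| m * n)%Z then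
    (gamma^*)%C *
      \sum_(t : ZL | Lunit t && (Lnorm t == (m * n)%:~R)) xi t * eZ (- Ltr t)
  else 0.

(* \hat H(psi, a1, a2, a3), psi a Dirichlet character mod q viewed on 'Z_q;
   the inverse u^-1 is taken in 'Z_q (only relevant when u is a unit,
   since psi vanishes on non-units) *)
Definition Hhat (p k kappa : nat) (gamma : R[i]) (xi : ZL -> R[i])
  (psi : 'Z_q -> R[i]) (a1 a2 a3 : int) : R[i] :=
  ((p%:R ^+ (2 * k))^-1) *
  \sum_(u : 'Z_q) \sum_(x1 : 'Z_q) \sum_(x2 : 'Z_q) \sum_(x3 : 'Z_q)
     ((psi u)^*)%C * Hker p k kappa gamma xi (Posz (val (u^-1 * x1 * x2 * x3))) 1
     * eZ (a1%:~R * x1 + a2%:~R * x2 + a3%:~R * x3 - u * (a1 * a2 * a3)%:~R).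

Definition psi0 (u : 'Z_q) : R[i] := if u \is a GRing.unit then 1 else 0.

End Defs.

(* Main.v *)
Require Import Defs.
From mathcomp Require Import all_boot all_order all_algebra.
From mathcomp Require Import reals trigo complex.
From mathcomp Require Import ring lra zify.
Import Order.TTheory GRing.Theory Num.Theory.
Local Open Scope ring_scope.

Section E.
Variable R : realType.
Variable q : nat.
Hypothesis hq : (1 < q)%N.

Lemma cplx_mul (a b c d : R) : ((a +i* b) * (c +i* d) = (a*c - b*d) +i* (a*d + b*c))%C.
Proof. by []. Qed.

Lemma eq_D (x y : int) : eq_ R q (x + y) = eq_ R q x * eq_ R q y.
Proof.
rewrite /eq_ cplx_mul -cosD (addrC (cos _ * _)) -sinD intrD !mulrDr !mulrDl.
by [].
Qed.

Lemma eq_qj (j : nat) : eq_ R q (q * j)%N = 1.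
Proof.
have q0 : (q%:R : R) != 0 by rewrite pnatr_eq0 -lt0n ltnW.
rewrite /eq_ /=.
have -> : (2 * pi * ((q * j)%N : int)%:~R / q%:R : R) = (pi *+ 2) *+ j.
  rewrite -[((q*j)%N : int)%:~R]/((q*j)%:R) natrM.
  rewrite [q%:R * _]mulrC mulrA mulfK //.
  by rewrite mulr_natr mulr_natl.
elim: j => [|j IH]; first by rewrite mulr0n cos0 sin0.
by rewrite mulrS addrC cosD2pi sinD2pi.
Qed.

Lemma eq_mod (m : nat) : eq_ R q (m %% q)%N = eq_ R q m.
Proof.
rewrite {2}(divn_eq m q) PoszD eq_D mulnC eq_qj mul1r //.
Qed.

Lemma eq_modT (m : nat) : eq_ R q (m %% (Zp_trunc q).+2)%N = eq_ R q m.
Proof. by rewrite Zp_cast // eq_mod. Qed.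

Lemma eZ_D (x y : 'Z_q) : eZ R (x + y) = eZ R x * eZ R y.
Proof.
rewrite /eZ -eq_D -PoszD -eq_mod /= eq_mod eq_modT //.
Qed.

Lemma eZ0 : eZ R (0 : 'Z_q) = 1.
Proof. by rewrite /eZ /eq_ /= mulr0 mul0r cos0 sin0. Qed.

Lemma eZ_eq1 (x : 'Z_q) : eZ R x = 1 -> x = 0.
Proof.
rewrite /eZ /eq_ /= => -[c1 s0].
apply/val_inj => /=.
have q0 : (0 : R) < q%:R by rewrite ltr0n ltnW.
have xq : (val x < q)%N by apply: (leq_trans (ltn_ord x)); rewrite Zp_cast.
apply/eqP; rewrite eqn0Ngt; apply/negP => x0.
set th := (2 * pi * _ / _ : R) in c1 s0.
have th0 : 0 < th.
  by rewrite /th divr_gt0 // mulr_gt0 ?mulr_gt0 ?pi_gt0 // ltr0n.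
have th2 : th < pi *+ 2.
  have -> : (pi : R) *+ 2 = 2 * pi by rewrite mulr_natl.
  rewrite /th ltr_pdivrMr // ltr_pM2l ?mulr_gt0 ?pi_gt0 //.
  by rewrite -[_%:~R]/(_%:R) ltr_nat.
case: (ltgtP th pi) => hth.
- by have := @sin_gt0_pi R th; rewrite th0 hth s0 ltxx => /(_ isT).
- have h : 0 < th - pi < pi.
    rewrite subr_gt0 hth /= ltrBlDr; by rewrite -mulr2n.
  have := sin_gt0_pi h; rewrite -oppr_lt0 -sinDpi subrK s0 ltxx; by [].
- move: c1; rewrite hth cospi => h; lra.
Qed.


End E.

Section Zq.
Variables (p k : nat).
Hypotheses (hp : prime p) (hk : (0 < k)%N).
Local Notation q := (p ^ k)%N.

Lemma q_gt1 : (1 < q)%N.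
Proof.
have h2 := prime_gt1 hp.
case: k hk => // k' _; rewrite expnS.
apply: (leq_trans h2); rewrite leq_pmulr // expn_gt0 ltnW //.
Qed.

Lemma dvd_modq (m : nat) : (p %| m %% (Zp_trunc q).+2)%N = (p %| m)%N.
Proof.
rewrite Zp_cast ?q_gt1 // /dvdn modn_dvdm //.
by rewrite -(expn1 p) dvdn_exp2l.
Qed.

Lemma unitZ (y : 'Z_q) : (y \is a GRing.unit) = ~~ (p %| val y)%N.
Proof.
by rewrite -[y in LHS]natr_Zp unitZpE ?q_gt1 // coprime_pexpl // prime_coprime.
Qed.

Lemma unit_shift (x c : 'Z_q) : c \isn't a GRing.unit ->
  (x + c \is a GRing.unit) = (x \is a GRing.unit).
Proof.
rewrite !unitZ negbK /= => pc; congr (~~ _).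
by rewrite dvd_modq dvdn_addl.
Qed.

Lemma intZ0 (z : int) : ((z%:~R : 'Z_q) == 0) = ((q%:Z) %| z)%Z.
Proof.
have H (n : nat) : ((n%:R : 'Z_q) == 0) = (q %| n)%N.
  by rewrite -val_eqE /= val_Zp_nat ?q_gt1.
case: z => n; first exact: H.
by rewrite NegzE mulrNz oppr_eq0 dvdzE abszN /= H.
Qed.

End Zq.

Lemma sum_ind (R : realType) (q : nat) (a : 'Z_q) (h : 'Z_q -> R[i]) :
  \sum_(u : 'Z_q) (if u == a then h u else 0) = h a.
Proof. by rewrite -big_mkcond big_pred1_eq. Qed.

Lemma ex4 (C : nmodType) (I J : finType) (P : pred J) (h : I -> I -> I -> J -> C) :
  \sum_(x1 : I) \sum_(x2 : I) \sum_(x3 : I) \sum_(t | P t) h x1 x2 x3 t =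
  \sum_(t | P t) \sum_(x1 : I) \sum_(x2 : I) \sum_(x3 : I) h x1 x2 x3 t.
Proof.
transitivity (\sum_(x1 : I) \sum_(x2 : I) \sum_(t | P t) \sum_(x3 : I) h x1 x2 x3 t).
  by apply: eq_bigr => x1 _; apply: eq_bigr => x2 _; exact: exchange_big.
transitivity (\sum_(x1 : I) \sum_(t | P t) \sum_(x2 : I) \sum_(x3 : I) h x1 x2 x3 t).
  by apply: eq_bigr => x1 _; exact: exchange_big.
exact: exchange_big.
Qed.

Section Main.
Variables (R : realType) (p k : nat) (eps : int) (gamma : R[i])
  (xi : ZL (p ^ k) -> R[i]) (a1 a2 a3 : int).
Hypotheses (hp : prime p) (hk : (0 < k)%N).
Local Notation q := (p ^ k)%N.

Definition E (u x1 x2 x3 : 'Z_q) : R[i] :=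
  eZ R (a1%:~R * x1 + a2%:~R * x2 + a3%:~R * x3 - u * (a1 * a2 * a3)%:~R).
Definition G (y : 'Z_q) : R[i] :=
  \sum_(t : ZL q | Lunit eps t && (Lnorm eps t == y)) xi t * eZ R (- Ltr t).
Definition F (n : 'Z_q) : R[i] :=
  \sum_(x1 : 'Z_q) \sum_(x2 : 'Z_q) \sum_(x3 : 'Z_q)
    (if x1 * x2 * x3 \is a GRing.unit then E (x1 * x2 * x3 / n) x1 x2 x3 else 0).

Lemma HkerE (y : 'Z_q) : Hker eps p k k gamma xi (Posz (val y)) 1 =
  if y \is a GRing.unit then (gamma^*)%C * G y else 0.
Proof.
rewrite /Hker leqnn mulr1 dvdzE /= unitZ //.
case: (p %| val y)%N => //=.
congr (_ * _); apply: eq_bigl => t; congr (_ && (_ == _)).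
by rewrite -[(Posz _)%:~R]/((val y)%:R) natr_Zp.
Qed.

Lemma eq_swap {u n X : 'Z_q} : u \is a GRing.unit -> n \is a GRing.unit ->
  X \is a GRing.unit -> (n == u^-1 * X) = (u == X / n).
Proof.
move=> hu hn hX; apply/eqP/eqP => ->.
  by rewrite invrM ?unitrV // invrK mulVKr.
by rewrite invrM ?unitrV // invrK mulrVK.
Qed.

Lemma inner_u (x1 x2 x3 : 'Z_q) :
  \sum_(u : 'Z_q) ((@psi0 R q u)^*)%C *
     Hker eps p k k gamma xi (Posz (val (u^-1 * x1 * x2 * x3))) 1 * E u x1 x2 x3
  = if x1 * x2 * x3 \is a GRing.unit then (gamma^*)%C *
      \sum_(t : ZL q | Lunit eps t) xi t * eZ R (- Ltr t)
         * E (x1 * x2 * x3 / Lnorm eps t) x1 x2 x3 else 0.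
Proof.
set X := x1 * x2 * x3.
have eX u : u^-1 * x1 * x2 * x3 = u^-1 * X by rewrite /X !mulrA.
under eq_bigr do rewrite eX.
case hX: (X \is a GRing.unit); last first.
  rewrite big1 // => u _; rewrite HkerE //.
  by rewrite unitrM hX andbF mulr0 mul0r.
transitivity (\sum_(u : 'Z_q) \sum_(t : ZL q | Lunit eps t)
  (if u == X / Lnorm eps t then (gamma^*)%C * (xi t * eZ R (- Ltr t) * E u x1 x2 x3)
   else 0)).
  apply: eq_bigr => u _; rewrite HkerE // /psi0; case: ifP => hu.
    rewrite conjc1 mul1r unitrM unitrV hu hX /= /G big_mkcondr /= mulr_sumr big_distrl /=.
    apply: eq_bigr => t Lt.
    have hn : Lnorm eps t \is a GRing.unit := Lt.
    rewrite (eq_swap hu hn hX).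
    by case: ifP; rewrite ?mulr0 ?mul0r // !mulrA.
  rewrite conjc0 !mul0r big1 // => t Lt; rewrite ifF //; apply/negbTE.
  apply: contraFN hu => /eqP ->; rewrite unitrM unitrV hX.
  exact: Lt.
rewrite exchange_big /= mulr_sumr; apply: eq_bigr => t Lt.
by rewrite sum_ind.
Qed.

Lemma main_form : Hhat eps p k k gamma xi (@psi0 R q) a1 a2 a3 =
  (p%:R ^+ (2*k))^-1 * ((gamma^*)%C *
    \sum_(t : ZL q | Lunit eps t) xi t * eZ R (- Ltr t) * F (Lnorm eps t)).
Proof.
rewrite /Hhat; congr (_ * _).
rewrite -(@ex4 _ _ _ predT (fun x1 x2 x3 u => ((@psi0 R q u)^*)%C *
     Hker eps p k k gamma xi (Posz (val (u^-1 * x1 * x2 * x3))) 1 * E u x1 x2 x3)).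
transitivity (\sum_(x1 : 'Z_q) \sum_(x2 : 'Z_q) \sum_(x3 : 'Z_q)
  \sum_(t : ZL q | Lunit eps t) (gamma^*)%C * (xi t * eZ R (- Ltr t) *
     (if x1 * x2 * x3 \is a GRing.unit then E (x1 * x2 * x3 / Lnorm eps t) x1 x2 x3 else 0))).
  apply: eq_bigr => x1 _; apply: eq_bigr => x2 _; apply: eq_bigr => x3 _.
  rewrite inner_u; case: ifP => _.
    by rewrite mulr_sumr.
  by rewrite big1 // => t _; rewrite !mulr0.
rewrite ex4 mulr_sumr; apply: eq_bigr => t _.
rewrite /F !mulr_sumr; apply: eq_bigr => x1 _.
rewrite !mulr_sumr; apply: eq_bigr => x2 _.
by rewrite !mulr_sumr; apply: eq_bigr => x3 _.
Qed.

Lemma F_ram (n : 'Z_q) : ((a1 * a2 * a3)%:~R : 'Z_q) = 0 ->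
  F n = Ram R q a1 * Ram R q a2 * Ram R q a3.
Proof.
move=> hA; have hq : (1 < q)%N := q_gt1 p k hp hk.
have RamE a : Ram R q a = \sum_(x : 'Z_q) (if x \is a GRing.unit then eZ R (a%:~R * x) else 0).
  by rewrite /Ram big_mkcond.
rewrite /F !RamE big_distrl big_distrl /=; apply: eq_bigr => x1 _.
rewrite -mulrA big_distrl big_distrr /=; apply: eq_bigr => x2 _.
rewrite mulrA big_distrr /=; apply: eq_bigr => x3 _.
rewrite /E hA mulr0 subr0 !(eZ_D R q hq) !unitrM.
by case: (x1 \is a GRing.unit); case: (x2 \is a GRing.unit);
   case: (x3 \is a GRing.unit); rewrite /= ?mulr0 ?mul0r.
Qed.

Lemma F_filter (n : 'Z_q) : F n = \sum_(x1 : 'Z_q | x1 \is a GRing.unit)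
  \sum_(x2 : 'Z_q | x2 \is a GRing.unit) \sum_(x3 : 'Z_q | x3 \is a GRing.unit)
    E (x1 * x2 * x3 / n) x1 x2 x3.
Proof.
rewrite /F [RHS]big_mkcond /=; apply: eq_bigr => x1 _.
case: ifP => h1; last first.
  by rewrite big1 // => x2 _; rewrite big1 // => x3 _; rewrite !unitrM h1.
rewrite [RHS]big_mkcond /=; apply: eq_bigr => x2 _.
case: ifP => h2; last first.
  by rewrite big1 // => x3 _; rewrite !unitrM h2 andbF.
rewrite [RHS]big_mkcond /=; apply: eq_bigr => x3 _.
by rewrite !unitrM h1 h2.
Qed.

Lemma shift0 (f : 'Z_q -> R[i]) (c : 'Z_q) (w : R[i]) :
  c \isn't a GRing.unit -> w != 1 -> (forall x, f (x + c) = w * f x) ->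
  \sum_(x : 'Z_q | x \is a GRing.unit) f x = 0.
Proof.
move=> hc hw hf.
have : \sum_(x : 'Z_q | x \is a GRing.unit) f x =
       w * \sum_(x : 'Z_q | x \is a GRing.unit) f x.
  rewrite [LHS](reindex_inj (addIr c)) /= mulr_sumr.
  rewrite [LHS](eq_bigl (fun x => x \is a GRing.unit)); last first.
    by move=> x; rewrite /= unit_shift.
  by apply: eq_bigr => x _; rewrite hf.
move/eqP; rewrite -subr_eq0 -{1}(mul1r (\sum_(_ | _) _)) -mulrBl mulf_eq0 subr_eq0.
by rewrite eq_sym (negbTE hw) => /eqP.
Qed.

Lemma E_shift1 (n c x1 x2 x3 : 'Z_q) :
  ((a1 * a2 * a3)%:~R : 'Z_q) * c = 0 ->
  E ((x1 + c) * x2 * x3 / n) (x1 + c) x2 x3 =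
  eZ R (a1%:~R * c) * E (x1 * x2 * x3 / n) x1 x2 x3.
Proof.
move=> hAc; have hq : (1 < q)%N := q_gt1 p k hp hk.
rewrite /E -(eZ_D R q hq); congr eZ.
set A := ((a1 * a2 * a3)%:~R : 'Z_q).
have -> : (x1 + c) * x2 * x3 / n * A = x1 * x2 * x3 / n * A + x2 * x3 / n * (A * c)
  by ring.
rewrite hAc mulr0 addr0; ring.
Qed.

Lemma E_shift2 (n c x1 x2 x3 : 'Z_q) :
  ((a1 * a2 * a3)%:~R : 'Z_q) * c = 0 ->
  E (x1 * (x2 + c) * x3 / n) x1 (x2 + c) x3 =
  eZ R (a2%:~R * c) * E (x1 * x2 * x3 / n) x1 x2 x3.
Proof.
move=> hAc; have hq : (1 < q)%N := q_gt1 p k hp hk.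
rewrite /E -(eZ_D R q hq); congr eZ.
set A := ((a1 * a2 * a3)%:~R : 'Z_q).
have -> : x1 * (x2 + c) * x3 / n * A = x1 * x2 * x3 / n * A + x1 * x3 / n * (A * c)
  by ring.
rewrite hAc mulr0 addr0; ring.
Qed.

Lemma eZ_ne1 (y : 'Z_q) : y != 0 -> eZ R y != 1.
Proof.
move=> hy; apply/eqP => /(@eZ_eq1 R q (q_gt1 p k hp hk) y) h; by rewrite h eqxx in hy.
Qed.

Lemma F_zero1 (n c : 'Z_q) : c \isn't a GRing.unit ->
  ((a1 * a2 * a3)%:~R : 'Z_q) * c = 0 -> (a1%:~R : 'Z_q) * c != 0 -> F n = 0.
Proof.
move=> hc hAc h1; rewrite F_filter.
apply: (@shift0 _ c _ hc (eZ_ne1 _ h1)) => x1.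
rewrite mulr_sumr; apply: eq_bigr => x2 _.
rewrite mulr_sumr; apply: eq_bigr => x3 _.
exact: E_shift1.
Qed.

Lemma F_zero2 (n c : 'Z_q) : c \isn't a GRing.unit ->
  ((a1 * a2 * a3)%:~R : 'Z_q) * c = 0 -> (a2%:~R : 'Z_q) * c != 0 -> F n = 0.
Proof.
move=> hc hAc h2; rewrite F_filter.
apply: big1 => x1 _.
apply: (@shift0 _ c _ hc (eZ_ne1 _ h2)) => x2.
rewrite mulr_sumr; apply: eq_bigr => x3 _.
exact: E_shift2.
Qed.

End Main.

Theorem lemma5p12 (R : realType) (p k : nat) (eps : int)
  (gamma : R[i]) (xi : ZL (p ^ k) -> R[i]) (a1 a2 a3 : int) :
  prime p -> odd p ->
  (forall x : int, ~~ (p%:Z %| x ^+ 2 - eps)%Z) ->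
  `|gamma| = 1 ->
  xi (Lone (p ^ k)) = 1 ->
  (forall a b, Lunit eps a -> Lunit eps b ->
     xi (Lmul eps a b) = xi a * xi b) ->
  (forall x : 'Z_(p ^ k), x \is a GRing.unit -> xi (x, 0) = 1) ->
  (exists t, Lunit eps t /\ xi (Lconj t) != xi t) ->
  (exists x y : 'Z_(p ^ k),
     xi (1 + (p ^ k.-1)%:R * x, (p ^ k.-1)%:R * y) != 1) ->
  (2 <= k)%N -> (10 <= k)%N || (10 <= p)%N ->
  (p%:Z %| a1 * a2 * a3)%Z ->
  Hhat eps p k k gamma xi (@psi0 R (p ^ k)) a1 a2 a3 =
  if ((p ^ k)%:Z %| a1 * a2 * a3)%Z then
    (gamma^*)%C * (p%:R ^+ (2 * k))^-1 * tauL eps xi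
      * Ram R (p ^ k) a1 * Ram R (p ^ k) a2 * Ram R (p ^ k) a3
  else 0.
Proof.
move=> hp _ _ _ _ _ _ _ _ hk2 _ hpA.
have hk : (0 < k)%N by apply: leq_trans hk2.
rewrite (main_form R p k eps gamma xi a1 a2 a3 hp hk).
case: ifP => hdiv.
  have hA : (((a1 * a2 * a3)%:~R) : 'Z_(p ^ k)) = 0.
    by apply/eqP; rewrite (intZ0 p k hp hk).
  under eq_bigr => t _ do rewrite (F_ram R p k a1 a2 a3 hp hk _ hA).
  rewrite -big_distrl /= -/(tauL eps xi); ring.
set A := a1 * a2 * a3 in hdiv hpA *.
have A0 : A != 0 by apply: contraFN hdiv => /eqP ->; exact: dvdz0.
have := A0; rewrite /A !mulf_eq0 !negb_or => /andP[/andP[a10 a20] a30].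
have nAE : `|A|%N = (`|a1| * `|a2| * `|a3|)%N by rewrite /A !abszM.
have g1 : (0 < `|a1|)%N by rewrite absz_gt0.
have g2 : (0 < `|a2|)%N by rewrite absz_gt0.
have g3 : (0 < `|a3|)%N by rewrite absz_gt0.
have gA : (0 < `|A|)%N by rewrite absz_gt0.
set v := logn p `|A|.
have vE : v = (logn p `|a1| + logn p `|a2| + logn p `|a3|)%N.
  by rewrite /v nAE !lognM // muln_gt0 g1 g2.
have hv1 : (1 <= v)%N.
  by rewrite /v -(pfactor_dvdn 1 hp gA) expn1; move: hpA; rewrite dvdzE.
have hvk : (v < k)%N.
  rewrite ltnNge; apply/negP => kv; move/negbT: hdiv; apply/negP; apply/negPn.
  rewrite dvdzE /=; apply: dvdn_trans (pfactor_dvdnn p `|A|).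
  by rewrite dvdn_exp2l.
set c := ((p ^ (k - v))%:R : 'Z_(p ^ k)).
have hc : c \isn't a GRing.unit.
  rewrite /c unitZpE ?q_gt1 // coprime_pexpl // prime_coprime // negbK.
  by rewrite dvdn_exp ?subn_gt0.
have cE : c = (((p ^ (k - v))%N : int)%:~R) by [].
have hAc : ((A%:~R : 'Z_(p ^ k)) * c) = 0.
  apply/eqP; rewrite cE -intrM (intZ0 p k hp hk) dvdzE abszM /=.
  rewrite -{1}(subnKC (ltnW hvk)) expnD dvdn_mul //.
  exact: pfactor_dvdnn.
have hi (a : int) : a != 0 -> (logn p `|a| < v)%N -> ((a%:~R : 'Z_(p ^ k)) * c) != 0.
  move=> a0 la; rewrite cE -intrM (intZ0 p k hp hk) dvdzE abszM /=.
  rewrite pfactor_dvdn ?muln_gt0 ?absz_gt0 ?a0 ?expn_gt0 ?prime_gt0 //.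
  rewrite lognM ?absz_gt0 ?expn_gt0 ?prime_gt0 // pfactorK //.
  rewrite -ltnNge; lia.
rewrite big1 ?mulr0 // => t _.
case: (ltnP (logn p `|a1|) v) => l1.
  by rewrite (F_zero1 R p k a1 a2 a3 hp hk _ _ hc hAc (hi _ a10 l1)) mulr0.
have l2 : (logn p `|a2| < v)%N by lia.
by rewrite (F_zero2 R p k a1 a2 a3 hp hk _ _ hc hAc (hi _ a20 l2)) mulr0.
Qed.
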